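(* Let $n\ge3$ and $x\in\mathbb{C}$, and let $A$ be the $n\times n$ tridiagonal matrix with all diagonal entries $x$, all subdiagonal entries $\mathbf{i}$, superdiagonal entries $A_{1,2}=A_{n-1,n}=2\mathbf{i}$ and $A_{k,k+1}=\mathbf{i}$ for $2\le k\le n-2$, where $\mathbf{i}=\sqrt{-1}$. Then $$\det(A)=(x^2+4)F_{n-1}(x).$$
   Context: The Fibonacci polynomials are defined by $F_0(x)=0$, $F_1(x)=1$, $F_n(x)=xF_{n-1}(x)+F_{n-2}(x)$ for $n\ge2$. *)

(* Defs.v *)
From mathcomp Require Import all_boot all_order all_algebra all_field.
Set Implicit Arguments. Unset Strict Implicit. Unset Printing Implicit Defensive.
Import Order.TTheory GRing.Theory Num.Theory.
Local Open Scope ring_scope.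

(* Fibonacci polynomials: F_0 = 0, F_1 = 1, F_n = X F_{n-1} + F_{n-2}. *)
Fixpoint fibpoly_aux (R : comNzRingType) (n : nat) : {poly R} * {poly R} :=
  match n with
  | 0%N => (0, 1)
  | m.+1 => let p := fibpoly_aux R m in (p.2, 'X * p.2 + p.1)
  end.
Definition fibpoly (R : comNzRingType) (n : nat) : {poly R} := (fibpoly_aux R n).1.

Definition tridA (n : nat) (x : algC) : 'M[algC]_n :=
  \matrix_(i < n, j < n)
    if (i : nat) == j then x
    else if (i : nat) == j.+1 then 'i
    else if (j : nat) == i.+1 then
      (if ((i : nat) == 0%N) || ((i : nat) == (n - 2)%N) then 2 * 'i else 'i)
    else 0.

(* Main.v *)
Require Import Defs.
From mathcomp Require Import all_boot all_order all_algebra all_field.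
From mathcomp Require Import ring lra zify.
Import GRing.Theory Num.Theory.
Local Open Scope ring_scope.

Definition tri (k : nat) (d l : algC) (u : nat -> algC) : 'M[algC]_k :=
  \matrix_(i < k, j < k)
    if (i : nat) == j then d
    else if (i : nat) == j.+1 then l
    else if (j : nat) == i.+1 then u (i : nat) else 0.

Lemma tri_rec k d l u :
  \det (tri k.+2 d l u) = d * \det (tri k.+1 d l u) - l * u k * \det (tri k d l u).
Proof.
rewrite (expand_det_row _ ord_max) big_ord_recr big_ord_recr /=.
rewrite big1 ?add0r; last first.
  move=> j _; rewrite !mxE /=.
  have hj := ltn_ord j.
  by do 3 (rewrite ifF; last by apply/negbTE; lia); rewrite mul0r.
rewrite addrC; congr (_ + _).
  rewrite !mxE /= eqxx /cofactor /= -signr_odd oddD addbb expr0 mul1r.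
  congr (_ * \det _); apply/matrixP => i j; rewrite !mxE !lift_max //.
rewrite !mxE /=.
have -> : (k.+1 == k) = false by apply/negbTE; lia.
rewrite eqxx /cofactor /= addSn exprS addnn -signr_odd odd_double expr0 mulr1.
set M := row' _ _.
rewrite (expand_det_col M ord_max) big_ord_recr /= big1 ?add0r; last first.
  move=> i _; rewrite /M !mxE /= /bump /=.
  have hi := ltn_ord i.
  have -> : (k < i)%N = false by lia.
  rewrite leqnn.
  by do 3 (rewrite ifF; last by apply/negbTE; lia); rewrite mul0r.
rewrite /M !mxE /= /bump /= leqnn ltnn /=.
rewrite ifF; last by apply/negbTE; lia.
rewrite ifF; last by apply/negbTE; lia.
rewrite eqxx /cofactor /= addnn -signr_odd odd_double expr0 mul1r.
have -> : row' ord_max (col' ord_max M) = tri k d l u.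
  apply/matrixP => i j; rewrite /M !mxE /= /bump /=.
  have hi := ltn_ord i; have hj := ltn_ord j.
  have h1 : (k <= i)%N = false by lia.
  have h2 : (k <= j)%N = false by lia.
  have h3 : (k < i)%N = false by lia.
  by rewrite h1 h2 !add0n h3 h2 !add0n.
rewrite add0n.
by rewrite mulN1r mulrN mulrA.
Qed.

Definition fv (x : algC) k := (fibpoly algC k).[x].

Lemma fvE x k : fv x k.+2 = x * fv x k.+1 + fv x k.
Proof. by rewrite /fv /fibpoly /= !hornerE. Qed.

Lemma fv0 x : fv x 0 = 0. Proof. by rewrite /fv /fibpoly /= horner0. Qed.
Lemma fv1 x : fv x 1 = 1. Proof. by rewrite /fv /fibpoly /= hornerC. Qed.

Theorem theorem12 (n : nat) (x : algC) :
  (3 <= n)%N ->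
  \det (tridA n x) = (x ^+ 2 + 4) * (fibpoly algC n.-1).[x].
Proof.
move=> hn.
pose u := fun i : nat => if (i == 0%N) || (i == (n - 2)%N) then 2 * 'i else 'i : algC.
have -> : tridA n x = tri n x 'i u by apply/matrixP => i j; rewrite !mxE.
pose g k := \det (tri k x 'i u).
have gE : forall k, (k.+2 <= n)%N -> g k.+2 = x * g k.+1 - 'i * u k * g k.
  by move=> k _; rewrite /g tri_rec.
have g0 : g 0%N = 1 by rewrite /g det_mx00.
have g1 : g 1%N = x by rewrite /g det_mx11 mxE.
have Q : forall k, (k.+3 <= n)%N ->
    g k.+1 = fv x k.+2 + fv x k /\ g k.+2 = fv x k.+3 + fv x k.+1.
  elim=> [|k IH] hk.
    rewrite gE; last by lia.
    rewrite g1 g0 /u /= !fvE fv0 fv1; split; first by ring.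
    have h : 'i * (2 * 'i) = -2 :> algC by rewrite mulrCA -expr2 sqrCi; ring.
    rewrite h; ring.
  have [h1 h2] := IH (ltnW hk).
  split => //.
  rewrite gE; last by lia.
  have -> : u k.+1 = 'i.
    rewrite /u ifF //; apply/negbTE; lia.
  rewrite h1 h2 -expr2 sqrCi (fvE x k.+2) (fvE x k).
  ring.
rewrite -/(g n).
have [m hm] : exists m, n = m.+3 by exists (n - 3)%N; lia.
have [h1 h2] := Q m (eq_leq (esym hm)).
have hu : u m.+1 = 2 * 'i by rewrite /u ifT //; apply/orP; right; apply/eqP; lia.
rewrite hm gE; last by lia.
rewrite /= -/(fv x m.+2) hu.
have h : 'i * (2 * 'i) = -2 :> algC by rewrite mulrCA -expr2 sqrCi; ring.
rewrite h h1 h2 (fvE x m.+1) (fvE x m).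
ring.
Qed.
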